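(* Let $k\ge2$, let $\Pi\subsetneq\Sigma_k$ be a proper subshift, and let $T:\Pi\to\Sigma_k$ be the map constructed below. If $y,\tilde y\in\Pi$ form a DC1 pair, then $T(y),T(\tilde y)$ form a DC1 pair.
   Context: $\Sigma_k=\{0,\dots,k-1\}^{\mathbb{N}}$ with metric $d(x,y)=\sum_{n\ge1}\delta(x_n,y_n)/2^n$ ($\delta(a,b)=0$ if $a=b$, $1$ otherwise) and shift $\sigma$. A subshift is a nonempty closed $\sigma$-invariant subset; a finite word is contained in $\Pi$ if it is a prefix of some point of $\Pi$. Construction of $T$: enumerate all finite words contained in $\Pi$ as $C_1,C_2,\dots$; fix a finite word $A_1$ not contained in $\Pi$; for $y\in\Pi$ let $Y_n$ be its first $n$ symbols; $B_n=C_nY_n\cdots Y_n$ ($Y_n$ repeated $|A_n|^2$ times), $A_{n+1}=A_nB_nA_n$; $T(y)$ is the point having every $A_n$ as prefix; the construction requires $|C_n|=o(|A_n|)$. With $\Phi^{(n)}_{xy}(t)=\frac1n|\{0\le i<n: d(\sigma^ix,\sigma^iy)<t\}|$, a pair $(x,y)$ is DC1 if $\liminf_n\Phi^{(n)}_{xy}(s)=0$ for some $s>0$ and $\limsup_n\Phi^{(n)}_{xy}(t)=1$ for all $t>0$. *)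

(* Defs.v *)
From Stdlib Require Import Reals List Arith.
From Coquelicot Require Import Coquelicot.
Open Scope R_scope.

(* Points of the full shift: sequences nat -> nat, indexed from 0
   (index i corresponds to the paper's coordinate i+1). *)
Definition pt := nat -> nat.
Definition word := list nat.

Definition in_Sigma (k : nat) (x : pt) : Prop := forall n, (x n < k)%nat.

Definition dist (x y : pt) : R :=
  Series (fun n => if Nat.eq_dec (x n) (y n) then 0 else / 2 ^ (S n)).

Definition shift (x : pt) : pt := fun n => x (S n).
Definition shift_iter (i : nat) (x : pt) : pt := Nat.iter i shift x.

Definition subshift (k : nat) (Pi : pt -> Prop) : Prop :=
  (exists x, Pi x) /\
  (forall x, Pi x -> in_Sigma k x) /\
  (forall x, in_Sigma k x ->
     (forall eps, 0 < eps -> exists z, Pi z /\ dist x z < eps) -> Pi x) /\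
  (forall x, Pi x -> Pi (shift x)).

Definition proper_subshift (k : nat) (Pi : pt -> Prop) : Prop :=
  subshift k Pi /\ exists x, in_Sigma k x /\ ~ Pi x.

Definition prefix_of (w : word) (x : pt) : Prop :=
  forall i, (i < length w)%nat -> nth i w 0%nat = x i.

Definition contained (Pi : pt -> Prop) (w : word) : Prop :=
  exists x, Pi x /\ prefix_of w x.

Definition Yw (y : pt) (n : nat) : word := map y (seq 0 n).

(* The words A_n, 0-based: Aw C A1 y n = A_{n+1}; C n = C_{n+1}.
   A_{n+1} = A_n B_n A_n, B_n = C_n Y_n ... Y_n (|A_n|^2 copies). *)
Fixpoint Aw (C : nat -> word) (A1 : word) (y : pt) (n : nat) : word :=
  match n with
  | O => A1
  | S m =>
      let a := Aw C A1 y m in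
      a ++ (C m ++ concat (repeat (Yw y (S m)) (length a ^ 2))) ++ a
  end.

Definition Phi (x y : pt) (t : R) (n : nat) : R :=
  INR (length (filter
         (fun i => if Rlt_dec (dist (shift_iter i x) (shift_iter i y)) t
                   then true else false)
         (seq 0 n))) / INR n.

Definition DC1 (x y : pt) : Prop :=
  (exists s, 0 < s /\ LimInf_seq (Phi x y s) = Finite 0) /\
  (forall t, 0 < t -> LimSup_seq (Phi x y t) = Finite 1).

(* Main.v *)
Require Import Defs.
From Stdlib Require Import Reals List Arith Lia Lra.
From Coquelicot Require Import Coquelicot.
Open Scope R_scope.

Definition dterm (x z : pt) (n : nat) : R :=
  if Nat.eq_dec (x n) (z n) then 0 else / 2 ^ (S n).

Lemma dterm_bnd x z n : 0 <= dterm x z n <= (/2) ^ n * /2.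
Proof.
  unfold dterm. rewrite pow_inv.
  assert (0 < / 2 ^ n) by (apply Rinv_0_lt_compat, pow_lt; lra).
  simpl. rewrite Rinv_mult.
  destruct Nat.eq_dec; split; try lra; apply Rmult_le_pos; lra.
Qed.

Lemma geom_half : is_series (fun n => (/2) ^ n * /2) 1.
Proof.
  replace 1 with ((/ (1 - /2)) * /2) by field.
  apply (is_series_scal_r (/2)).
  apply is_series_geom. rewrite Rabs_pos_eq; lra.
Qed.

Lemma dterm_ex x z : ex_series (dterm x z).
Proof.
  apply (@ex_series_le R_AbsRing R_CompleteNormedModule _ (fun n => (/2) ^ n * /2)).
  - intro n. destruct (dterm_bnd x z n). unfold norm; simpl.
    unfold abs; simpl. rewrite Rabs_pos_eq; lra.
  - eexists; apply geom_half.
Qed.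

Lemma dist_bnd x z : 0 <= Defs.dist x z <= 1.
Proof.
  unfold Defs.dist. fold (dterm x z). split.
  - replace 0 with (Series (fun n => 0 * dterm x z n)).
    + apply Series_le. intro n; destruct (dterm_bnd x z n); lra.
      apply dterm_ex.
    + rewrite Series_scal_l; ring.
  - rewrite <- (is_series_unique _ _ geom_half).
    apply Series_le. apply dterm_bnd. eexists; apply geom_half.
Qed.

Lemma dist_rec x z : Defs.dist x z =
  (if Nat.eq_dec (x 0%nat) (z 0%nat) then 0 else /2) + /2 * Defs.dist (shift x) (shift z).
Proof.
  unfold Defs.dist. fold (dterm x z). fold (dterm (shift x) (shift z)).
  rewrite Series_incr_1 by apply dterm_ex.
  rewrite <- Series_scal_l. f_equal.
  - unfold dterm. destruct Nat.eq_dec; simpl; auto. field.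
  - apply Series_ext. intro n. unfold dterm, shift.
    destruct Nat.eq_dec; [lra|]. simpl. rewrite !Rinv_mult. ring.
Qed.

Lemma dist_agree m : forall x z, (forall j, (j < m)%nat -> x j = z j) -> Defs.dist x z <= / 2 ^ m.
Proof.
  induction m; intros x z H.
  - simpl. rewrite Rinv_1. apply dist_bnd.
  - rewrite dist_rec. destruct Nat.eq_dec as [_|E]; [|exfalso; apply E, H; lia].
    simpl. rewrite Rinv_mult.
    assert (Defs.dist (shift x) (shift z) <= / 2 ^ m).
    { apply IHm. intros j Hj. unfold shift. apply H. lia. }
    lra.
Qed.

Lemma dist_disagree j : forall x z, x j <> z j -> / 2 ^ (S j) <= Defs.dist x z.
Proof.
  induction j; intros x z H.
  - rewrite dist_rec. destruct Nat.eq_dec; [contradiction|].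
    pose proof (dist_bnd (shift x) (shift z)). simpl. lra.
  - rewrite dist_rec. 
    assert (/ 2 ^ S j <= Defs.dist (shift x) (shift z)) by (apply IHj; exact H).
    change (2 ^ S (S j)) with (2 * 2 ^ S j). rewrite Rinv_mult.
    destruct Nat.eq_dec; lra.
Qed.

Lemma dist_small m x z : Defs.dist x z < / 2 ^ m -> forall j, (j < m)%nat -> x j = z j.
Proof.
  intros H j Hj. destruct (Nat.eq_dec (x j) (z j)); auto.
  pose proof (dist_disagree j x z n).
  assert (/ 2 ^ m <= / 2 ^ S j).
  { apply Rinv_le_contravar. apply pow_lt; lra. apply Rle_pow; [lra|lia]. }
  lra.
Qed.

Lemma shift_iter_eq i x j : shift_iter i x j = x (i + j)%nat.
Proof.
  revert x j; induction i; intros; auto.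
  unfold shift_iter in *. rewrite Nat.iter_succ_r. rewrite IHi. unfold shift.
  f_equal; lia.
Qed.

Definition cnt (P : nat -> bool) (s n : nat) : nat := length (filter P (seq s n)).

Definition agreeb (x z : pt) (m i : nat) : bool :=
  forallb (fun j => Nat.eqb (x (i+j)%nat) (z (i+j)%nat)) (seq 0 m).

Definition distb (x z : pt) (t : R) (i : nat) : bool :=
  if Rlt_dec (Defs.dist (shift_iter i x) (shift_iter i z)) t then true else false.

Lemma agreeb_spec x z m i :
  agreeb x z m i = true <-> (forall j, (j < m)%nat -> x (i+j)%nat = z (i+j)%nat).
Proof.
  unfold agreeb. rewrite forallb_forall. split.
  - intros H j Hj. apply Nat.eqb_eq. apply H. apply in_seq. lia.
  - intros H j Hj. apply in_seq in Hj. apply Nat.eqb_eq. apply H. lia.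
Qed.

Lemma cnt_add P s a b : cnt P s (a+b) = (cnt P s a + cnt P (s+a) b)%nat.
Proof. unfold cnt. rewrite seq_app, filter_app, length_app. reflexivity. Qed.

Lemma cnt_le P s n : (cnt P s n <= n)%nat.
Proof.
  unfold cnt. rewrite <- (length_seq n s) at 2. generalize (seq s n).
  induction l; simpl; auto. destruct (P a); simpl; lia.
Qed.

Lemma cnt_mono P Q s n : (forall i, P i = true -> Q i = true) -> (cnt P s n <= cnt Q s n)%nat.
Proof.
  intro H. unfold cnt. generalize (seq s n).
  induction l; simpl; auto. destruct (P a) eqn:E.
  - rewrite (H a E). simpl. lia.
  - destruct (Q a); simpl; lia.
Qed.

Lemma cnt_ext P Q s s' n : (forall k, (k < n)%nat -> P (s+k)%nat = Q (s'+k)%nat) ->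
  cnt P s n = cnt Q s' n.
Proof.
  induction n; intro H; auto.
  replace (S n) with (n + 1)%nat by lia. rewrite !cnt_add. rewrite IHn by (intros; apply H; lia).
  f_equal. unfold cnt; simpl. rewrite H by lia. destruct (Q _); reflexivity.
Qed.

Lemma cnt_blocks_ge P s p d K L :
  (forall q, (q < L)%nat -> (K <= cnt P (s + q*p) p + d)%nat) ->
  (L*K <= cnt P s (L*p) + L*d)%nat.
Proof.
  induction L; intro H; simpl; [lia|].
  replace (p + L*p)%nat with (L*p + p)%nat by lia.
  rewrite cnt_add. specialize (H L ltac:(lia)) as H1.
  assert (L*K <= cnt P s (L*p) + L*d)%nat by (apply IHL; intros; apply H; lia).
  lia.
Qed.

Lemma cnt_blocks_le P s p d K L :
  (forall q, (q < L)%nat -> (cnt P (s + q*p) p <= K + d)%nat) ->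
  (cnt P s (L*p) <= L*K + L*d)%nat.
Proof.
  induction L; intro H; simpl; [unfold cnt; simpl; lia|].
  replace (p + L*p)%nat with (L*p + p)%nat by lia.
  rewrite cnt_add. specialize (H L ltac:(lia)) as H1.
  assert (cnt P s (L*p) <= L*K + L*d)%nat by (apply IHL; intros; apply H; lia).
  lia.
Qed.

Lemma F1 x z m t i : / 2 ^ m < t -> agreeb x z m i = true -> distb x z t i = true.
Proof.
  intros Ht H. rewrite agreeb_spec in H. unfold distb.
  destruct Rlt_dec as [|n]; auto. exfalso; apply n.
  eapply Rle_lt_trans; [|exact Ht]. apply dist_agree.
  intros j Hj. rewrite !shift_iter_eq. auto.
Qed.

Lemma F2 x z m i : distb x z (/ 2 ^ m) i = true -> agreeb x z m i = true.
Proof.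
  unfold distb. destruct Rlt_dec as [H|]; [|discriminate]. intros _.
  apply agreeb_spec. intros j Hj. pose proof (dist_small m _ _ H j Hj).
  rewrite !shift_iter_eq in H0. auto.
Qed.

Lemma Phi_cnt x z t n : Phi x z t n = INR (cnt (distb x z t) 0 n) / INR n.
Proof. reflexivity. Qed.

Lemma Phi_bnd x z t n : 0 <= Phi x z t n <= 1.
Proof.
  rewrite Phi_cnt. pose proof (cnt_le (distb x z t) 0 n).
  destruct n. { unfold cnt; simpl. unfold Rdiv; rewrite Rinv_0, Rmult_0_l. lra. }
  apply le_INR in H. pose proof (pos_INR (cnt (distb x z t) 0 (S n))).
  assert (0 < INR (S n)) by (apply lt_0_INR; lia).
  split. apply Rdiv_le_0_compat; lra.
  assert (0 < / INR (S n)) by (apply Rinv_0_lt_compat; lra).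
  replace 1 with (INR (S n) * / INR (S n)) by (field; lra).
  unfold Rdiv. apply Rmult_le_compat_r; lra.
Qed.

Lemma cnt_period P Q s s' p m :
  (forall k, (k + m <= p)%nat -> P (s+k)%nat = Q (s'+k)%nat) ->
  (cnt P s p <= cnt Q s' p + m)%nat.
Proof.
  intro H. destruct (le_lt_dec m p).
  - replace p with ((p - m) + m)%nat by lia. rewrite !cnt_add.
    rewrite (cnt_ext P Q s s' (p-m)) by (intros; apply H; lia).
    pose proof (cnt_le P (s + (p-m)) m). lia.
  - pose proof (cnt_le P s p). lia.
Qed.

Lemma length_concat_repeat (w : word) L : length (concat (repeat w L)) = (L * length w)%nat.
Proof. induction L; simpl; auto. rewrite length_app, IHL. lia. Qed.

Lemma nth_concat_repeat (w : word) L q r : (r < length w)%nat -> (q < L)%nat ->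
  nth (q * length w + r) (concat (repeat w L)) 0%nat = nth r w 0%nat.
Proof.
  revert q; induction L; intros q Hr Hq; [lia|]. simpl.
  destruct q.
  - simpl. rewrite app_nth1 by lia. reflexivity.
  - rewrite app_nth2 by (simpl; lia).
    replace (S q * length w + r - length w)%nat with (q * length w + r)%nat by (simpl; lia).
    apply IHL; lia.
Qed.

Lemma Yw_len y n : length (Yw y n) = n.
Proof. unfold Yw. rewrite length_map, length_seq. auto. Qed.

Lemma Yw_nth y n r : (r < n)%nat -> nth r (Yw y n) 0%nat = y r.
Proof.
  intro H. unfold Yw. rewrite nth_indep with (d' := y 0%nat) by (rewrite length_map, length_seq; auto).
  rewrite map_nth, seq_nth by auto. reflexivity.
Qed.

Lemma Aw_len C A1 y y' n : length (Aw C A1 y n) = length (Aw C A1 y' n).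
Proof.
  induction n; simpl; auto.
  rewrite !length_app, !length_concat_repeat, !Yw_len, IHn. reflexivity.
Qed.

Lemma Aw_pos C A1 y n : (1 <= length A1)%nat -> (1 <= length (Aw C A1 y n))%nat.
Proof.
  intro H. induction n; simpl; auto. rewrite !length_app. lia.
Qed.

Lemma T_block C A1 (Ty : pt) y n q r :
  prefix_of (Aw C A1 y (S n)) Ty ->
  (q < length (Aw C A1 y n) ^ 2)%nat -> (r < S n)%nat ->
  Ty (length (Aw C A1 y n) + length (C n) + q * S n + r)%nat = y r.
Proof.
  intros HP Hq Hr. set (a := Aw C A1 y n) in *. set (L := (length a ^ 2)%nat) in *.
  assert (HL : length (Aw C A1 y (S n)) =
     (length a + (length (C n) + L * S n) + length a)%nat).
  { cbn [Aw]. fold a. fold L. rewrite !length_app, length_concat_repeat, Yw_len. ring. }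
  assert (q * S n + r < L * S n)%nat.
  { apply Nat.lt_le_trans with (S q * S n)%nat. simpl. lia. apply Nat.mul_le_mono_r; lia. }
  rewrite <- HP by lia. cbn [Aw]. fold a. fold L.
  rewrite app_nth2 by lia.
  replace (length a + length (C n) + q * S n + r - length a)%nat with (length (C n) + (q * S n + r))%nat by lia.
  rewrite app_nth1 by (rewrite length_app, length_concat_repeat, Yw_len; lia).
  rewrite app_nth2 by lia.
  replace (length (C n) + (q * S n + r) - length (C n))%nat with (q * S n + r)%nat by lia.
  rewrite <- (Yw_len y (S n)) at 1.
  rewrite nth_concat_repeat by (rewrite ?Yw_len; lia).
  apply Yw_nth; auto.
Qed.

Lemma blockagree C A1 Ty Ty' y y' n m q k :
  prefix_of (Aw C A1 y (S n)) Ty -> prefix_of (Aw C A1 y' (S n)) Ty' ->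
  (q < length (Aw C A1 y n) ^ 2)%nat -> (k + m <= S n)%nat ->
  agreeb Ty Ty' m (length (Aw C A1 y n) + length (C n) + q * S n + k)%nat = agreeb y y' m k.
Proof.
  intros H1 H2 Hq Hk.
  assert (E' : forall r, (r < S n)%nat ->
     Ty' (length (Aw C A1 y n) + length (C n) + q * S n + r)%nat = y' r).
  { intros r Hr. rewrite (Aw_len C A1 y y'). apply T_block; auto.
    rewrite <- (Aw_len C A1 y y'); auto. }
  assert (E : forall r, (r < S n)%nat ->
     Ty (length (Aw C A1 y n) + length (C n) + q * S n + r)%nat = y r).
  { intros r Hr. apply T_block; auto. }
  apply Bool.eq_iff_eq_true. rewrite !agreeb_spec. split; intros H j Hj.
  - specialize (H j Hj).
    replace (length (Aw C A1 y n) + length (C n) + q * S n + k + j)%nat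
      with (length (Aw C A1 y n) + length (C n) + q * S n + (k + j))%nat in H by lia.
    rewrite E, E' in H by lia. exact H.
  - replace (length (Aw C A1 y n) + length (C n) + q * S n + k + j)%nat
      with (length (Aw C A1 y n) + length (C n) + q * S n + (k + j))%nat by lia.
    rewrite E, E' by lia. apply H; auto.
Qed.

Lemma blockcount C A1 Ty Ty' y y' n m :
  prefix_of (Aw C A1 y (S n)) Ty -> prefix_of (Aw C A1 y' (S n)) Ty' ->
  let a := length (Aw C A1 y n) in
  let L := (a ^ 2)%nat in
  let s0 := (a + length (C n))%nat in
  let Ky := cnt (agreeb y y' m) 0 (S n) in
  (L * Ky <= cnt (agreeb Ty Ty' m) 0 (s0 + L * S n) + L * m)%nat /\
  (cnt (agreeb Ty Ty' m) 0 (s0 + L * S n) <= s0 + L * Ky + L * m)%nat.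
Proof.
  intros H1 H2 a L s0 Ky. rewrite cnt_add. change (0 + s0)%nat with s0.
  split.
  - pose proof (cnt_blocks_ge (agreeb Ty Ty' m) s0 (S n) m Ky L).
    assert (L * Ky <= cnt (agreeb Ty Ty' m) s0 (L * S n) + L * m)%nat; [|lia].
    apply H. intros q Hq. apply cnt_period. intros k Hk.
    simpl. unfold s0, a. symmetry. apply blockagree; auto.
  - pose proof (cnt_blocks_le (agreeb Ty Ty' m) s0 (S n) m Ky L).
    assert (cnt (agreeb Ty Ty' m) s0 (L * S n) <= L * Ky + L * m)%nat.
    2:{ pose proof (cnt_le (agreeb Ty Ty' m) 0 s0). lia. }
    apply H. intros q Hq. apply cnt_period. intros k Hk.
    simpl. unfold s0, a. apply blockagree; auto.
Qed.

Lemma exists_m t : 0 < t -> exists m, / 2 ^ m < t.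
Proof.
  intro Ht. destruct (pow_lt_1_zero (/2) ltac:(rewrite Rabs_pos_eq; lra) t Ht) as [N HN].
  exists N. specialize (HN N (le_n _)). rewrite pow_inv in HN.
  rewrite Rabs_pos_eq in HN; auto. left; apply Rinv_0_lt_compat, pow_lt; lra.
Qed.

Lemma big_p e m : 0 < e -> exists N, forall p, (N <= p)%nat -> e * INR p >= 2 * (INR m + 2).
Proof.
  intro He. destruct (INR_unbounded (2 * (INR m + 2) / e)) as [N HN].
  exists N. intros p Hp. apply le_INR in Hp.
  assert (INR p >= 2 * (INR m + 2) / e) by lra.
  apply Rmult_ge_compat_l with (r := e) in H; [|lra].
  replace (e * (2 * (INR m + 2) / e)) with (2 * (INR m + 2)) in H by (field; lra). lra.
Qed.

Lemma realA (cT Ky L m p E : nat) e : 0 < e <= 1/2 -> (1 <= L)%nat -> (1 <= p)%nat ->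
  (L * Ky <= cT + L * m)%nat -> (E <= L * (p + 2))%nat -> (0 < E)%nat ->
  INR Ky > (1 - e/2) * INR p -> e * INR p >= 2 * (INR m + 2) ->
  1 - e < INR cT / INR E.
Proof.
  intros He HL Hp H1 H2 H3 H4 H5.
  apply le_INR in H1, H2. apply lt_INR in H3. rewrite !plus_INR, !mult_INR in *.
  simpl in H2, H3. apply le_INR in HL. simpl in HL.
  apply Rmult_lt_reg_r with (INR E); [lra|].
  unfold Rdiv. rewrite Rmult_assoc, Rinv_l, Rmult_1_r by lra.
  assert ((1 - e) * INR E <= (1 - e) * (INR L * (INR p + 2))).
  { rewrite plus_INR in H2. simpl (INR 2) in H2. apply Rmult_le_compat_l; lra. }
  assert ((1 - e) * (INR p + 2) < INR Ky - INR m) by nra.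
  assert (INR L * ((1 - e) * (INR p + 2)) < INR L * (INR Ky - INR m)).
  { apply Rmult_lt_compat_l; lra. }
  nra.
Qed.

Lemma realB (cT Ky L m p E : nat) e : 0 < e -> (1 <= L)%nat -> (1 <= p)%nat ->
  (cT <= L * (Ky + m + 2))%nat -> (L * p <= E)%nat ->
  INR Ky < (e/2) * INR p -> e * INR p >= 2 * (INR m + 2) ->
  INR cT / INR E < e.
Proof.
  intros He HL Hp H1 H2 H4 H5.
  apply le_INR in H1, H2. rewrite !mult_INR, !plus_INR in *. simpl in H1.
  apply le_INR in HL, Hp. simpl in HL, Hp.
  assert (0 < INR E) by nra.
  apply Rmult_lt_reg_r with (INR E); [lra|].
  unfold Rdiv. rewrite Rmult_assoc, Rinv_l, Rmult_1_r by lra.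
  assert (INR Ky + INR m + 2 < e * INR p) by lra.
  assert (INR L * (INR Ky + INR m + 2) < INR L * (e * INR p)) by (apply Rmult_lt_compat_l; lra).
  assert (e * (INR L * INR p) <= e * INR E) by (apply Rmult_le_compat_l; lra).
  nra.
Qed.

Lemma div_lt a b d : 0 < d -> a / d < b -> a < b * d.
Proof.
  intros Hd H. apply Rmult_lt_compat_r with (r := d) in H; auto.
  unfold Rdiv in H. rewrite Rmult_assoc, Rinv_l, Rmult_1_r in H by lra. exact H.
Qed.

Lemma div_gt a b d : 0 < d -> b < a / d -> b * d < a.
Proof.
  intros Hd H. apply Rmult_lt_compat_r with (r := d) in H; auto.
  unfold Rdiv in H. rewrite Rmult_assoc, Rinv_l, Rmult_1_r in H by lra. exact H.
Qed.

Theorem proposition3p7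
  (k : nat) (Hk : (2 <= k)%nat)
  (Pi : pt -> Prop) (HPi : proper_subshift k Pi)
  (C : nat -> word)
  (HCin : forall n, contained Pi (C n))
  (HCall : forall w, contained Pi w -> exists n, C n = w)
  (HCinj : forall m n, C m = C n -> m = n)
  (A1 : word) (HA1k : List.Forall (fun a => (a < k)%nat) A1)
  (HA1 : ~ contained Pi A1)
  (Hlen : forall y, Pi y -> forall m : nat, exists N, forall n, (N <= n)%nat ->
            (m * length (C n) <= length (Aw C A1 y n))%nat)
  (T : pt -> pt)
  (HT : forall y, Pi y -> forall n, prefix_of (Aw C A1 y n) (T y))
  (y y' : pt) (Hy : Pi y) (Hy' : Pi y') :
  DC1 y y' -> DC1 (T y) (T y').
Proof.
  intros [[s [Hs Hinf]] Hsup].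
  assert (HA1len : (1 <= length A1)%nat).
  { destruct A1 as [|a0 A1']; simpl; [|lia]. exfalso. apply HA1.
    destruct HPi as [[[x Hx] _] _]. exists x. split; auto. intros i Hi; simpl in Hi; lia. }
  destruct (Hlen y Hy 1%nat) as [Nh HNh].
  assert (Hpre : forall n, prefix_of (Aw C A1 y n) (T y)) by (apply HT; auto).
  assert (Hpre' : forall n, prefix_of (Aw C A1 y' n) (T y')) by (apply HT; auto).
  assert (Hgeo : forall n0, (Nh <= n0)%nat ->
     (1 <= length (Aw C A1 y n0) ^ 2)%nat /\
     (length (Aw C A1 y n0) + length (C n0) + length (Aw C A1 y n0) ^ 2 * S n0
        <= length (Aw C A1 y n0) ^ 2 * (S n0 + 2))%nat /\
     (length (Aw C A1 y n0) + length (C n0) <= 2 * length (Aw C A1 y n0) ^ 2)%nat).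
  { intros n0 Hn0. specialize (HNh n0 Hn0). pose proof (Aw_pos C A1 y n0 HA1len).
    set (a := length (Aw C A1 y n0)) in *. simpl. nia. }
  split.
  - destruct (exists_m s Hs) as [m Hm]. exists (/ 2 ^ m).
    split; [apply Rinv_0_lt_compat, pow_lt; lra|].
    apply is_LimInf_seq_unique. intro eps. split.
    + intro N. destruct (big_p eps m (cond_pos eps)) as [N2 HN2].
      destruct (ex_LimInf_seq (Phi y y' s)) as [l Hl].
      rewrite (is_LimInf_seq_unique _ _ Hl) in Hinf. subst l. simpl in Hl.
      assert (He2 : 0 < eps/2) by (pose proof (cond_pos eps); lra).
      destruct (Hl (mkposreal _ He2)) as [Hl1 _].
      destruct (Hl1 (max N (max N2 (S Nh)))) as [p [Hp Hphi]]. simpl in Hphi.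
      destruct p as [|n0]; [lia|].
      destruct (Hgeo n0 ltac:(lia)) as [G1 [G2 G3]].
      pose proof (blockcount C A1 (T y) (T y') y y' n0 m (Hpre _) (Hpre' _)) as [_ BU].
      cbv zeta in BU.
      set (a := length (Aw C A1 y n0)) in *. set (L := (a^2)%nat) in *.
      exists (a + length (C n0) + L * S n0)%nat. split; [nia|].
      rewrite Phi_cnt.
      eapply Rle_lt_trans.
      { unfold Rdiv. apply Rmult_le_compat_r.
        left; apply Rinv_0_lt_compat, lt_0_INR; nia.
        apply le_INR. apply cnt_mono. apply F2. }
      rewrite Rplus_0_l.
      apply (realB _ (cnt (agreeb y y' m) 0 (S n0)) L m (S n0));
        [apply cond_pos | lia | lia | nia | nia | | ].
      * rewrite Phi_cnt, Rplus_0_l in Hphi.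
        apply div_lt in Hphi; [|apply lt_0_INR; lia].
        eapply Rle_lt_trans; [|exact Hphi].
        apply le_INR, cnt_mono. intros i. apply F1. exact Hm.
      * apply HN2. lia.
    + exists 0%nat. intros n _. pose proof (Phi_bnd (T y) (T y') (/2^m) n).
      pose proof (cond_pos eps). lra.
  - intros t Ht. destruct (exists_m t Ht) as [m Hm].
    specialize (Hsup (/2^m) (Rinv_0_lt_compat _ (pow_lt 2 m ltac:(lra)))).
    destruct (ex_LimSup_seq (Phi y y' (/2^m))) as [l Hl].
    rewrite (is_LimSup_seq_unique _ _ Hl) in Hsup. subst l. simpl in Hl.
    apply is_LimSup_seq_unique. intro eps. split.
    + intro N. set (e := Rmin eps (1/2)).
      assert (He : 0 < e <= 1/2).
      { unfold e. pose proof (cond_pos eps). apply Rmin_case_strong; intros; lra. }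
      assert (He' : e <= eps) by apply Rmin_l.
      destruct (big_p e m ltac:(lra)) as [N2 HN2].
      assert (He2 : 0 < e/2) by lra.
      destruct (Hl (mkposreal _ He2)) as [Hl1 _].
      destruct (Hl1 (max N (max N2 (S Nh)))) as [p [Hp Hphi]]. simpl in Hphi.
      destruct p as [|n0]; [lia|].
      destruct (Hgeo n0 ltac:(lia)) as [G1 [G2 G3]].
      pose proof (blockcount C A1 (T y) (T y') y y' n0 m (Hpre _) (Hpre' _)) as [BL _].
      cbv zeta in BL.
      set (a := length (Aw C A1 y n0)) in *. set (L := (a^2)%nat) in *.
      exists (a + length (C n0) + L * S n0)%nat. split; [nia|].
      rewrite Phi_cnt.
      apply Rle_lt_trans with (1 - e); [lra|].
      eapply Rlt_le_trans.
      2:{ unfold Rdiv. apply Rmult_le_compat_r.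
        left; apply Rinv_0_lt_compat, lt_0_INR; nia.
        apply le_INR. apply cnt_mono. intro i. apply F1. exact Hm. }
      apply (realA _ (cnt (agreeb y y' m) 0 (S n0)) L m (S n0));
        [lra | lia | lia | exact BL | lia | nia | | ].
      * rewrite Phi_cnt in Hphi.
        apply div_gt in Hphi; [|apply lt_0_INR; lia].
        eapply Rlt_le_trans; [exact Hphi|].
        apply le_INR, cnt_mono. intros i. apply F2.
      * apply HN2. lia.
    + exists 0%nat. intros n _. pose proof (Phi_bnd (T y) (T y') t n).
      pose proof (cond_pos eps). lra.
Qed.
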